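(* Let $(X,d)$ be a metric space and $A\subset X$ a subset. Let $\{\sigma_{xy}\}_{x,y\in A}$ be a collection of geodesics $\sigma_{xy}\colon[0,1]\to X$ (i.e. $d(\sigma_{xy}(s),\sigma_{xy}(t))=|s-t|\,d(x,y)$) such that $\sigma_{xy}(0)=x$, $\sigma_{xy}(1)=y$, and $\sigma_{xy}(t)=\sigma_{yx}(1-t)$ for all $t\in[0,1]$ and $x,y\in A$. If \[ d(\sigma_{xy}(t),\sigma_{xz}(t))\le t\,d(y,z) \] for all $x,y,z\in A$ and $t\in[0,1]$, then \[ d(\sigma_{x_1x_2}(t),\sigma_{y_1y_2}(t))\le W_1\big((1-t)\delta_{x_1}+t\delta_{x_2},\,(1-t)\delta_{y_1}+t\delta_{y_2}\big) \] for all $t\in[0,1]$ and $x_1,x_2,y_1,y_2\in A$.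
   Context: For Radon probability measures $\mu,\nu$ on $X$, the first Wasserstein distance is $W_1(\mu,\nu)=\inf_{\gamma}\int_{X\times X}d(x,y)\,d\gamma(x,y)$, the infimum over all couplings $\gamma$ of $(\mu,\nu)$ (probability measures on $X\times X$ with marginals $\mu$ and $\nu$). $\delta_x$ is the Dirac measure at $x$. *)

(* Defs.v *)
From Stdlib Require Import Reals Lra List ClassicalEpsilon.
From Coquelicot Require Import Coquelicot.
Open Scope R_scope.

Definition is_metric {X : Type} (d : X -> X -> R) : Prop :=
  (forall x y, 0 <= d x y) /\
  (forall x y, d x y = 0 <-> x = y) /\
  (forall x y, d x y = d y x) /\
  (forall x y z, d x z <= d x y + d y z).

Definition eqR {X : Type} (x y : X) : R :=
  if excluded_middle_informative (x = y) then 1 else 0.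

(** Finitely supported (discrete) measures on X, written as finite sums of
    weighted Dirac masses  sum_i w_i delta_{p_i} , given as a list of (p_i, w_i). *)
Definition dmeasure (X : Type) := list (X * R).

Definition mass {X : Type} (mu : dmeasure X) (z : X) : R :=
  fold_right (fun pw acc => snd pw * eqR (fst pw) z + acc) 0 mu.

Definition two_point {X : Type} (t : R) (a b : X) : dmeasure X :=
  (a, 1 - t) :: (b, t) :: nil.

Definition is_coupling {X : Type} (mu nu : dmeasure X)
    (gamma : list ((X * X) * R)) : Prop :=
  (forall e, In e gamma -> 0 <= snd e) /\
  (forall z, fold_right (fun e acc => snd e * eqR (fst (fst e)) z + acc) 0 gamma
             = mass mu z) /\
  (forall z, fold_right (fun e acc => snd e * eqR (snd (fst e)) z + acc) 0 gamma
             = mass nu z).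

Definition cost {X : Type} (d : X -> X -> R) (gamma : list ((X * X) * R)) : R :=
  fold_right (fun e acc => snd e * d (fst (fst e)) (snd (fst e)) + acc) 0 gamma.

Definition W1 {X : Type} (d : X -> X -> R) (mu nu : dmeasure X) : Rbar :=
  Glb_Rbar (fun c => exists gamma, is_coupling mu nu gamma /\ c = cost d gamma).

Definition is_geodesic {X : Type} (d : X -> X -> R) (x y : X) (s : R -> X) : Prop :=
  s 0 = x /\ s 1 = y /\
  (forall u v, 0 <= u <= 1 -> 0 <= v <= 1 -> d (s u) (s v) = Rabs (u - v) * d x y).

(* Main.v *)
Require Import Defs.
From Stdlib Require Import Reals Lra List ClassicalEpsilon.
From Coquelicot Require Import Coquelicot.
Open Scope R_scope.

Section H.
Context {X : Type}.

Definition S (g : list ((X * X) * R)) (F : (X * X) * R -> R) : R :=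
  fold_right (fun e acc => snd e * F e + acc) 0 g.

Lemma S_ext g F G : (forall e, In e g -> snd e * F e = snd e * G e) -> S g F = S g G.
Proof.
  induction g as [|a g IH]; simpl; intros H; [reflexivity|].
  rewrite H by auto. rewrite IH; auto.
Qed.

Lemma S_le g F G : (forall e, In e g -> snd e * F e <= snd e * G e) -> S g F <= S g G.
Proof.
  induction g as [|a g IH]; simpl; intros H; [lra|].
  assert (H1 := H a (or_introl eq_refl)).
  assert (S g F <= S g G) by (apply IH; auto). unfold S in *. lra.
Qed.

Lemma S_add g F G : S g (fun e => F e + G e) = S g F + S g G.
Proof. induction g as [|a g IH]; simpl; [lra|]. unfold S in *. rewrite IH. ring. Qed.

Lemma S_scal g c F : S g (fun e => c * F e) = c * S g F.
Proof. induction g as [|a g IH]; simpl; [lra|]. unfold S in *. rewrite IH. ring. Qed.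

Lemma S_nonneg g F : (forall e, In e g -> 0 <= snd e * F e) -> 0 <= S g F.
Proof.
  induction g as [|a g IH]; simpl; intros H; [lra|].
  assert (H1 := H a (or_introl eq_refl)).
  assert (0 <= S g F) by (apply IH; auto). unfold S in *. lra.
Qed.

Lemma S_ge_elem g F e0 : (forall e, In e g -> 0 <= snd e * F e) -> In e0 g ->
  snd e0 * F e0 <= S g F.
Proof.
  induction g as [|a g IH]; simpl; intros H Hin; [contradiction|].
  assert (H1 := H a (or_introl eq_refl)).
  destruct Hin as [<-|Hin].
  - assert (0 <= S g F) by (apply S_nonneg; auto). unfold S in *. lra.
  - assert (snd e0 * F e0 <= S g F) by (apply IH; auto). unfold S in *. lra.
Qed.

Lemma eqR_refl (x : X) : eqR x x = 1.
Proof. unfold eqR. destruct (excluded_middle_informative (x = x)); congruence. Qed.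

Lemma eqR_neq (x y : X) : x <> y -> eqR x y = 0.
Proof. unfold eqR. destruct (excluded_middle_informative (x = y)); congruence. Qed.

Lemma eqR_ge0 (x y : X) : 0 <= eqR x y.
Proof. unfold eqR. destruct (excluded_middle_informative (x = y)); lra. Qed.

Lemma mass_two t (a b z : X) : mass (two_point t a b) z = (1 - t) * eqR a z + t * eqR b z.
Proof. unfold mass, two_point. simpl. ring. Qed.

Variable p : X * X -> X.
Variable g : list ((X * X) * R).
Variables (t : R) (x1 x2 : X).
Hypothesis ht : 0 <= t <= 1.
Hypothesis hnn : forall e, In e g -> 0 <= snd e.
Hypothesis hm : forall z, S g (fun e => eqR (p (fst e)) z) = mass (two_point t x1 x2) z.

Lemma supp e : In e g -> 0 < snd e -> p (fst e) = x1 \/ p (fst e) = x2.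
Proof.
  intros Hin Hpos.
  destruct (excluded_middle_informative (p (fst e) = x1)) as [E|N1]; [now left|].
  destruct (excluded_middle_informative (p (fst e) = x2)) as [E|N2]; [now right|].
  exfalso.
  assert (H := hm (p (fst e))). rewrite mass_two in H.
  rewrite (eqR_neq x1) in H by congruence. rewrite (eqR_neq x2) in H by congruence.
  assert (snd e * eqR (p (fst e)) (p (fst e)) <= S g (fun e0 => eqR (p (fst e0)) (p (fst e)))).
  { apply (S_ge_elem g (fun e0 => eqR (p (fst e0)) (p (fst e))) e); auto. intros e' He'. apply Rmult_le_pos; auto. apply eqR_ge0. }
  rewrite eqR_refl in H0. lra.
Qed.

Lemma per_entry e (P : Prop) : In e g -> (snd e = 0 -> P) ->
  ((p (fst e) = x1 \/ p (fst e) = x2) -> P) -> P.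
Proof.
  intros Hin H0 H1. destruct (Req_dec (snd e) 0) as [E|N]; auto.
  apply H1, supp; auto. specialize (hnn e Hin). lra.
Qed.

Lemma marg (f : X -> R) : S g (fun e => f (p (fst e))) = (1 - t) * f x1 + t * f x2.
Proof.
  destruct (excluded_middle_informative (x1 = x2)) as [E|N].
  - rewrite <- E.
    rewrite (S_ext g _ (fun e => f x1 * eqR (p (fst e)) x1)).
    + rewrite S_scal, hm, mass_two, <- E, eqR_refl. ring.
    + intros e Hin. apply (per_entry e); auto.
      * intros ->. ring.
      * intros [E'|E']; rewrite E'; try rewrite <- E; rewrite eqR_refl; ring.
  - rewrite (S_ext g _ (fun e => f x1 * eqR (p (fst e)) x1 + f x2 * eqR (p (fst e)) x2)).
    + rewrite S_add, !S_scal, !hm, !mass_two, !eqR_refl.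
      rewrite (eqR_neq x1 x2), (eqR_neq x2 x1) by congruence. ring.
    + intros e Hin. apply (per_entry e); auto.
      * intros ->. ring.
      * intros [E|E]; rewrite E, eqR_refl.
        -- rewrite (eqR_neq x1 x2) by congruence. ring.
        -- rewrite (eqR_neq x2 x1) by congruence. ring.
Qed.
End H.

Theorem lemma3p1 (X : Type) (d : X -> X -> R) (hd : is_metric d)
  (A : X -> Prop) (sigma : X -> X -> R -> X)
  (hgeo : forall x y, A x -> A y -> is_geodesic d x y (sigma x y))
  (hsym : forall x y t, A x -> A y -> 0 <= t <= 1 ->
            sigma x y t = sigma y x (1 - t))
  (hcontr : forall x y z t, A x -> A y -> A z -> 0 <= t <= 1 ->
            d (sigma x y t) (sigma x z t) <= t * d y z) :
  forall t x1 x2 y1 y2, 0 <= t <= 1 -> A x1 -> A x2 -> A y1 -> A y2 ->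
    Rbar_le (Finite (d (sigma x1 x2 t) (sigma y1 y2 t)))
            (W1 d (two_point t x1 x2) (two_point t y1 y2)).
Proof.
  destruct hd as [dpos [dzero [dsym dtri]]].
  assert (boundB : forall t x1 x2 y1 y2, 0 <= t <= 1/2 -> A x1 -> A x2 -> A y1 -> A y2 ->
    d (sigma x1 x2 t) (sigma y1 y2 t) <= (1 - 2*t) * d x1 y1 + t * d x2 y1 + t * d x1 y2).
  { intros t x1 x2 y1 y2 Ht A1 A2 B1 B2.
    assert (Ht' : 0 <= t <= 1) by lra.
    assert (Ht'' : 0 <= 1 - t <= 1) by lra.
    assert (H1 := hcontr x1 x2 y1 t A1 A2 B1 Ht').
    assert (H2 := hcontr y1 x1 y2 t B1 A1 B2 Ht').
    destruct (hgeo y1 x1 B1 A1) as [_ [_ G]].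
    assert (H3 := G (1 - t) t Ht'' Ht').
    rewrite Rabs_pos_eq in H3 by lra.
    rewrite (hsym x1 y1 t A1 B1 Ht') in H1.
    assert (T1 := dtri (sigma x1 x2 t) (sigma y1 x1 (1 - t)) (sigma y1 y2 t)).
    assert (T2 := dtri (sigma y1 x1 (1 - t)) (sigma y1 x1 t) (sigma y1 y2 t)).
    rewrite (dsym y1 x1) in H3. nra. }
  intros t x1 x2 y1 y2 Ht A1 A2 B1 B2.
  unfold W1.
  destruct (Glb_Rbar_correct (fun c => exists gamma, is_coupling (two_point t x1 x2) (two_point t y1 y2) gamma /\ c = cost d gamma)) as [_ Hglb].
  apply Hglb. intros c [gamma [[Hnn [Hm1 Hm2]] ->]]. simpl.
  assert (hm1 : forall z, S gamma (fun e => eqR (fst (fst e)) z) = mass (two_point t x1 x2) z) by exact Hm1.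
  assert (hm2 : forall z, S gamma (fun e => eqR (snd (fst e)) z) = mass (two_point t y1 y2) z) by exact Hm2.
  change (cost d gamma) with (S gamma (fun e => d (fst (fst e)) (snd (fst e)))).
  assert (dual : forall a1 a2 b1 b2,
    a1 + b1 <= d x1 y1 -> a1 + b2 <= d x1 y2 -> a2 + b1 <= d x2 y1 -> a2 + b2 <= d x2 y2 ->
    (x1 = x2 -> a1 = a2) -> (y1 = y2 -> b1 = b2) ->
    (1 - t) * a1 + t * a2 + ((1 - t) * b1 + t * b2) <= S gamma (fun e => d (fst (fst e)) (snd (fst e)))).
  { intros a1 a2 b1 b2 C11 C12 C21 C22 Ex Ey.
    set (al := fun a => if excluded_middle_informative (a = x1) then a1 else a2).
    set (be := fun b => if excluded_middle_informative (b = y1) then b1 else b2).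
    assert (al1 : al x1 = a1) by (unfold al; destruct (excluded_middle_informative (x1 = x1)); congruence).
    assert (al2 : al x2 = a2) by (unfold al; destruct (excluded_middle_informative (x2 = x1)); auto).
    assert (be1 : be y1 = b1) by (unfold be; destruct (excluded_middle_informative (y1 = y1)); congruence).
    assert (be2 : be y2 = b2) by (unfold be; destruct (excluded_middle_informative (y2 = y1)); auto).
    assert (HL := S_le gamma (fun e => al (fst (fst e)) + be (snd (fst e))) (fun e => d (fst (fst e)) (snd (fst e)))).
    rewrite S_add in HL.
    rewrite (marg fst gamma t x1 x2 Hnn hm1 al) in HL.
    rewrite (marg snd gamma t y1 y2 Hnn hm2 be) in HL.
    rewrite al1, al2, be1, be2 in HL. apply HL.
    intros e Hin.
    apply (per_entry fst gamma t x1 x2 Hnn hm1 e); auto. { intros ->. lra. }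
    intros Ha.
    apply (per_entry snd gamma t y1 y2 Hnn hm2 e); auto. { intros ->. lra. }
    intros Hb.
    apply Rmult_le_compat_l; [apply Hnn; auto|].
    unfold al, be.
    destruct (excluded_middle_informative (fst (fst e) = x1)) as [E1|E1];
    destruct (excluded_middle_informative (snd (fst e) = y1)) as [F1|F1].
    - rewrite E1, F1; auto.
    - assert (F2 : snd (fst e) = y2) by tauto. rewrite E1, F2; auto.
    - assert (E2 : fst (fst e) = x2) by tauto. rewrite E2, F1; auto.
    - assert (F2 : snd (fst e) = y2) by tauto. assert (E2 : fst (fst e) = x2) by tauto.
      rewrite E2, F2; auto. }
  assert (Ht1 : 0 <= 1 - t <= 1) by lra.
  destruct (Rle_dec (d x1 y1 + d x2 y2) (d x1 y2 + d x2 y1)) as [Hc|Hc].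
  -
    eapply Rle_trans; [|apply (dual 0 (d x2 y2 - d x1 y2) (d x1 y1) (d x1 y2))]; try lra.
    + assert (H1 := hcontr x1 x2 y2 t A1 A2 B2 Ht).
      assert (H2 := hcontr y2 x1 y1 (1 - t) B2 A1 B1 Ht1).
      rewrite <- (hsym x1 y2 t A1 B2 Ht), <- (hsym y1 y2 t B1 B2 Ht) in H2.
      assert (T := dtri (sigma x1 x2 t) (sigma x1 y2 t) (sigma y1 y2 t)).
      lra.
    + intros <-. lra.
    + intros <-. reflexivity.
  - destruct (Rle_dec t (1/2)) as [Ht2|Ht2].
    + eapply Rle_trans; [|apply (dual 0 (d x2 y1 - d x1 y1) (d x1 y1) (d x1 y2))]; try lra.
      * assert (H := boundB t x1 x2 y1 y2 ltac:(lra) A1 A2 B1 B2). lra.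
      * intros <-. lra.
      * intros <-. lra.
    + eapply Rle_trans; [|apply (dual (d x1 y2 - d x2 y2) 0 (d x2 y1) (d x2 y2))]; try lra.
      * assert (H := boundB (1 - t) x2 x1 y2 y1 ltac:(lra) A2 A1 B2 B1).
        rewrite <- (hsym x1 x2 t A1 A2 Ht), <- (hsym y1 y2 t B1 B2 Ht) in H. lra.
      * intros <-. lra.
      * intros <-. lra.
Qed.
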